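(* There is an $F_\sigma$ ideal $\mathcal I_0$ on $\omega$ such that $\mathcal I\le_{RK}^+\mathcal I_0$ for every $F_\sigma$ ideal $\mathcal I$ on $\omega$.
   Context: An ideal on $\omega$ is a set $\mathcal I\subseteq\mathcal P(\omega)$ closed under finite unions and under taking subsets. $\mathcal P(\omega)$ is topologized via the identification of subsets with characteristic functions in $2^\omega$ (product topology). For ideals $\mathcal I,\mathcal J$ on $\omega$, $\mathcal I\le_{RK}^+\mathcal J$ means there exist $A\subseteq\omega$ and a function $\beta:A\to\omega$ such that for every $x\subseteq\omega$, $x\in\mathcal I\iff\beta^{-1}(x)\in\mathcal J$. *)

(* Defs.v *)
From HB Require Import structures.
From mathcomp Require Import all_boot all_order all_algebra.
From mathcomp Require Import all_classical all_reals all_analysis.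
Set Implicit Arguments. Unset Strict Implicit. Unset Printing Implicit Defensive.
Local Open Scope classical_set_scope.

(* P(omega) identified with the Cantor space 2^omega (product topology):
   a point c of cantor_space corresponds to the subset [set n | c n]. *)
Definition set_of_point (c : cantor_space) : set nat := [set n | c n].

Definition as_cantor (I : set (set nat)) : set cantor_space :=
  [set c | I (set_of_point c)].

Definition Fsigma (T : topologicalType) (S : set T) : Prop :=
  exists F : nat -> set T, (forall n, closed (F n)) /\ S = \bigcup_n F n.

Definition is_ideal (I : set (set nat)) : Prop :=
  I set0 /\
  (forall a b, I a -> I b -> I (a `|` b)) /\
  (forall a b, b `<=` a -> I a -> I b).

Definition Fsigma_ideal (I : set (set nat)) : Prop :=
  is_ideal I /\ Fsigma (as_cantor I).

(* I <=_RK^+ J : there are A ⊆ ω and beta : A -> ω (values of beta outside A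
   are irrelevant) with x ∈ I <-> beta^{-1}(x) ∈ J for every x ⊆ ω. *)
Definition RK_plus (I J : set (set nat)) : Prop :=
  exists (A : set nat) (beta : nat -> nat),
    forall x : set nat, I x <-> J (A `&` (beta @^-1` x)).

(* Main.v *)
Require Import Defs.
From HB Require Import structures.
From mathcomp Require Import all_boot all_order all_algebra.
From mathcomp Require Import all_classical all_reals all_analysis.
From mathcomp Require Import zify.
Local Open Scope classical_set_scope.

Lemma nbhs_coord (z : cantor_space) (i : nat) : nbhs z [set w : cantor_space | w i = z i].
Proof.
have := @proj_continuous nat (fun _ => bool) i z.
move=> /(_ [set z i]) H.
apply: H.
by apply/principal_filterP.
Qed.

Lemma nbhs_agree (z : cantor_space) (N : nat) :
  nbhs z [set w : cantor_space | forall i, (i < N)%N -> w i = z i].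
Proof.
elim: N => [|N IH].
  by apply: (filterS _ filterT) => w _ i.
apply: filterS (filterI IH (nbhs_coord z N)).
move=> w [H1 H2] i; rewrite ltnS leq_eqVlt => /orP[/eqP->//|]; exact: H1.
Qed.

Lemma cluster_seq (G : set cantor_space) (s : nat -> cantor_space) :
  closed G -> (forall K, G (s K)) ->
  exists z, G z /\ forall K', exists K, (K' <= K)%N /\
     forall i, (i < K')%N -> s K i = z i.
Proof.
move=> cl sG.
have cG : compact G := subclosed_compact cl cantor_space_compact (@subsetT _ G).
have [|z [Gz clz]] := cG (s @ \oo) _.
  by exists 0%N => // K _; exact: sG.
exists z; split => // K'.
have FA : (s @ \oo) (s @` [set K | (K' <= K)%N]).
  by exists K' => // K hK; exists K.
have [w [[K hK <-] hw]] := clz _ _ FA (nbhs_agree z K').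
by exists K.
Qed.

Lemma cover_lemma (G : set cantor_space) (cl : closed G) :
  forall (k : nat) (x : set nat),
  (forall K, exists f : nat -> cantor_space, (forall j, (j < k)%N -> G (f j)) /\
      forall i, (i < K)%N -> x i -> exists2 j, (j < k)%N & f j i) ->
  exists f : nat -> cantor_space, (forall j, (j < k)%N -> G (f j)) /\
      forall i, x i -> exists2 j, (j < k)%N & f j i.
Proof.
elim=> [|k IH] x H.
  exists (fun _ _ => false); split => // i xi.
  by have [f [_ /(_ i (ltnSn i) xi) [j]]] := H i.+1.
have /choice [F HF] := H.
pose s := fun K => F K k.
have sG : forall K, G (s K) by move=> K; exact: (HF K).1.
have [z [Gz Hz]] := @cluster_seq G s cl sG.
pose x' := [set i | x i /\ ~~ z i].
have Hx' : forall K', exists f : nat -> cantor_space, (forall j, (j < k)%N -> G (f j)) /\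
      forall i, (i < K')%N -> x' i -> exists2 j, (j < k)%N & f j i.
  move=> K'.
have [K [hK agree]] := Hz K'.
  exists (F K); split.
    by move=> j hj; apply: (HF K).1; exact: ltnW.
  move=> i hi [xi nzi].
  have [j hj fj] := (HF K).2 i (leq_trans hi hK) xi.
  exists j => //.
  rewrite ltn_neqAle -ltnS hj andbT; apply/eqP => ejk.
  move: fj; rewrite ejk -/(s K) (agree i hi) => zi.
  by rewrite zi in nzi.
have [g [Gg Hg]] := IH x' Hx'.
  exists (fun j => if (j < k)%N then g j else z); split.
  by move=> j _; case: ifP => [/Gg|]. 
move=> i xi; case zi: (z i).
  by exists k => //; rewrite ltnn.
have [j hj gj] := Hg i (conj xi (negbT zi)).
by exists j; [exact: ltnW | rewrite hj].
Qed.

Definition Code := (nat * nat * seq (seq nat))%type.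
Definition code (c : Code) (i : nat) : nat := pickle (c, i).

Definition cov (k : nat) (H : seq (seq nat)) (s : set nat) : Prop :=
  exists m (f : nat -> seq nat), (m <= k)%N /\ (forall j, (j < m)%N -> f j \in H) /\
    forall i, s i -> exists2 j, (j < m)%N & i \in f j.

Lemma cov_sub k H (s s' : set nat) : s `<=` s' -> cov k H s' -> cov k H s.
Proof.
move=> ss [m [f [mk [fH fc]]]]; exists m, f; split => //; split => // i /ss; exact: fc.
Qed.

Lemma cov_union k1 k2 H s1 s2 : cov k1 H s1 -> cov k2 H s2 -> cov (k1 + k2) H (s1 `|` s2).
Proof.
move=> [m1 [f1 [mk1 [fH1 fc1]]]] [m2 [f2 [mk2 [fH2 fc2]]]].
exists (m1 + m2)%N, (fun j => if (j < m1)%N then f1 j else f2 (j - m1)%N); split.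
  exact: leq_add.
split.
  move=> j hj; case: ifP => hj1; first exact: fH1.
  apply: fH2; lia.
move=> i [/fc1 [j hj fj]|/fc2 [j hj fj]].
  by exists j; [lia| rewrite hj].
exists (j + m1)%N; first lia.
have -> : (j + m1 < m1)%N = false by lia.
by rewrite addnK.
Qed.

Definition I0 (y : set nat) : Prop :=
  exists k, forall (c : Code) N, (k <= c.1.1)%N ->
    cov k c.2 [set i | (i < N)%N /\ y (code c i)].

Lemma bound_fun (f : nat -> nat) N : exists M, forall i, (i < N)%N -> (f i < M)%N.
Proof.
elim: N => [|N [M HM]]; first by exists 0%N.
exists (maxn M (f N).+1) => i; rewrite ltnS leq_eqVlt => /orP[/eqP->|/HM]; lia.
Qed.

Lemma I0_ideal : is_ideal I0.
Proof.
split.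
  exists 0%N => c N _; exists 0%N, (fun _ => [::]); split => //; split => //.
  by move=> i [].
split.
  move=> a b [k1 H1] [k2 H2]; exists (k1 + k2)%N => c N hk.
  apply: (@cov_sub _ _ _ ([set i | (i < N)%N /\ a (code c i)] `|` [set i | (i < N)%N /\ b (code c i)])).
    by move=> i [hi [ai|bi]]; [left|right].
  apply: cov_union; [apply: H1|apply: H2]; lia.
move=> a b ba [k Hk]; exists k => c N hk.
apply: cov_sub (Hk c N hk) => i [hi /ba]; done.
Qed.

Lemma I0_Fsigma : Fsigma (as_cantor I0).
Proof.
exists (fun k => [set p : cantor_space | forall (c : Code) N, (k <= c.1.1)%N ->
    cov k c.2 [set i | (i < N)%N /\ p (code c i)]]); split.
  move=> k p clp c N hk.
  have [M HM] := bound_fun (code c) N.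
  have [w [Ew agree]] := clp _ (nbhs_agree p M).
  apply: cov_sub (Ew c N hk) => i [hi pi]; split => //.
  by rewrite agree //; exact: HM.
apply/seteqP; split => p.
  by move=> [k Hk]; exists k.
by move=> [k _ Hk]; exists k.
Qed.

Fixpoint allsubs (K : nat) : seq (seq nat) :=
  if K is K'.+1 then allsubs K' ++ [seq rcons t K' | t <- allsubs K'] else [:: [::]].

Lemma allsubs_filter (P : pred nat) K : [seq i <- iota 0 K | P i] \in allsubs K.
Proof.
elim: K => [|K IH]; first by rewrite inE.
rewrite -[K.+1]addn1 iotaD filter_cat add0n /= addn1 mem_cat.
case: (P K) => /=; last by rewrite cats0 -/(allsubs K) IH.
rewrite cats1 -/(allsubs K); apply/orP; right; exact: map_f.
Qed.

Section Red.
Variable I : set (set nat).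
Variable F : nat -> set cantor_space.
Hypothesis Iid : is_ideal I.
Hypothesis Fcl : forall n, closed (F n).
Hypothesis IE : as_cantor I = \bigcup_n F n.

Fixpoint Gs (n : nat) : set cantor_space :=
  if n is n'.+1 then Gs n' `|` F n else F 0%N.

Lemma Gs_closed n : closed (Gs n).
Proof. elim: n => [|n IH] /=; [exact: Fcl | exact: closedU]. Qed.

Lemma Gs_mono p n : (p <= n)%N -> Gs p `<=` Gs n.
Proof.
elim: n => [|n IH]; first by rewrite leqn0 => /eqP->.
rewrite leq_eqVlt => /orP[/eqP->//|]; rewrite ltnS => /IH H z /H ?; by left.
Qed.

Lemma F_Gs p : F p `<=` Gs p.
Proof. by case: p => [|p] //= z; right. Qed.

Lemma Gs_I n z : Gs n z -> I (set_of_point z).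
Proof.
elim: n => [|n IH] /=.
  by move=> Fz; have : as_cantor I z by rewrite IE; exists 0%N.
move=> [/IH//|Fz]; have : as_cantor I z by rewrite IE; exists n.+1.
done.
Qed.

Definition Lmem (n : nat) (t : seq nat) : bool :=
  `[< exists z, Gs n z /\ forall i, i \in t -> z i >].

Definition Hf (n K : nat) : seq (seq nat) := [seq t <- allsubs K | Lmem n t].

Definition Aset : set nat :=
  [set p | exists n K i, (i < K)%N /\ p = code ((n, K), Hf n K) i].

Definition beta (p : nat) : nat :=
  if (@unpickle (Code * nat)%type p) is Some (_, i) then i else 0%N.

Lemma decode x c i :
  (Aset `&` (beta @^-1` x)) (code c i) <->
  ((exists n K, c = ((n, K), Hf n K) /\ (i < K)%N) /\ x i).
Proof.
have bi : x (beta (code c i)) = x i by rewrite /beta /code pickleK.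
split.
  move=> [[n [K [i' [hi e]]]]]; rewrite /preimage /= bi => xi; split => //.
  move: e; rewrite /code => /(pcan_inj pickleK) [-> ->]; by exists n, K.
move=> [[n [K [-> hi]]] xi]; split; first by exists n, K, i.
by rewrite /preimage /=; rewrite (_ : x (beta _) = x i) // /beta /code pickleK.
Qed.

Lemma union_I k (g : nat -> cantor_space) :
  (forall j, (j < k)%N -> I (set_of_point (g j))) ->
  I [set i | exists2 j, (j < k)%N & g j i].
Proof.
case: Iid => I0 [Iu Isub].
elim: k => [|k IH] H.
  by apply: (Isub set0) => // i [].
apply: (Isub ([set i | exists2 j, (j < k)%N & g j i] `|` set_of_point (g k))).
  move=> i [j hj gj]; move: hj; rewrite ltnS leq_eqVlt => /orP[/eqP ejk|hj].
    by right; rewrite /set_of_point /= -ejk.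
  by left; exists j.
apply: Iu; first by apply: IH => j hj; apply: H; exact: ltnW.
exact: H.
Qed.

Lemma red : RK_plus I I0.
Proof.
case: (Iid) => I0s [Iu Isub].
exists Aset, beta => x; split.
  move=> Ix.
  pose px : cantor_space := fun n => `[< x n >].
  have spx : set_of_point px = x.
    by apply/seteqP; split => n; rewrite /set_of_point /px /= => /asboolP.
  have : as_cantor I px by rewrite /as_cantor /= spx.
  rewrite IE => -[p _ Fp].
  exists p.+1 => c N hk.
  case: (pselect (exists n K, c = ((n, K), Hf n K))) => [[n [K ec]]|nc].
    exists 1%N, (fun _ => [seq i <- iota 0 K | `[< x i >]]); split => //; split.
      move=> j _; rewrite ec /Hf /= mem_filter allsubs_filter andbT.
      apply/asboolP; exists px; split.
        apply: (@Gs_mono p); last exact: F_Gs.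
        by move: hk; rewrite ec /=; lia.
      by move=> i; rewrite mem_filter => /andP[].
    move=> i [_ /decode [[n' [K' [ec' hi]]] xi]]; exists 0%N => //.
    rewrite mem_filter mem_iota /= add0n; apply/andP; split; first exact/asboolP.
    by move: ec'; rewrite ec => -[_ ->].
  exists 0%N, (fun _ => [::]); split => //; split => //.
  move=> i [_ /decode [[n' [K' [ec' hi]]] xi]].
  by exfalso; apply: nc; exists n', K'.
move=> [k Hk].
have sK : forall K, cov k (Hf k K) [set i | (i < K)%N /\ x i].
  move=> K; apply: cov_sub (Hk ((k, K), Hf k K) K (leqnn k)) => i [hi xi].
  by split => //; apply/decode; split => //; exists k, K.
case: (pselect (exists z, Gs k z)) => [[z0 Gz0]|nz].
  have Hc : forall K, exists f : nat -> cantor_space, (forall j, (j < k)%N -> Gs k (f j)) /\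
      forall i, (i < K)%N -> x i -> exists2 j, (j < k)%N & f j i.
    move=> K; have [m [f [mk [fH fc]]]] := sK K.
    have /choice [g Hg] : forall j, exists z, (j < m)%N -> Gs k z /\ forall i, i \in f j -> z i.
      move=> j; case: (ltnP j m) => hj; last by exists z0.
      move: (fH j hj); rewrite /Hf mem_filter => /andP[/asboolP [z Hz] _].
      by exists z.
    exists (fun j => if (j < m)%N then g j else z0); split.
      by move=> j _; case: ifP => // hj; case: (Hg j hj).
    move=> i hi xi; have [j hj fj] := fc i (conj hi xi).
    exists j; first exact: leq_trans hj mk.
    by rewrite hj; case: (Hg j hj) => _; apply.
  have [g [Gg Hg]] := @cover_lemma (Gs k) (Gs_closed k) k x Hc.
  apply: (Isub _ _ _ (@union_I k g _)).
    move=> i xi; exact: Hg.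
  by move=> j hj; apply: (@Gs_I k); exact: Gg.
apply: (Isub set0) => // i xi.
have [m [f [mk [fH fc]]]] := sK i.+1.
have [j hj fj] := fc i (conj (ltnSn i) xi).
move: (fH j hj); rewrite /Hf mem_filter => /andP[/asboolP [z [Gz _]] _].
by apply: nz; exists z.
Qed.

End Red.

Theorem mainTheorem17 :
  exists I0 : set (set nat), Fsigma_ideal I0 /\
    forall I : set (set nat), Fsigma_ideal I -> RK_plus I I0.
Proof.
exists I0; split; first by split; [exact: I0_ideal | exact: I0_Fsigma].
move=> I [Iid [F [Fcl IE]]].
exact: (@red I F Iid Fcl IE).
Qed.
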